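(* Let $\alpha_1,\alpha_2,\alpha_3\in\mathbb{C}$ and let $\mathbf{x}=(x_s)\in\mathbb{C}^{\mathbb{Z}}$ satisfy, for all $v\in\mathbb{Z}$ (with $z_i=x_{v+i}$), $$z_0^2z_3^2+\alpha_1z_1^2z_2^2+\alpha_2z_0z_1z_2z_3+\alpha_3(z_0z_2^3+z_1^3z_3)=0.$$ Then for all $v\in\mathbb{Z}$, with $z_i=x_{v+i}$, $$(2z_0^2z_3+\alpha_2z_0z_1z_2+\alpha_3z_1^3)^2=(2z_{-1}z_2^2+\alpha_2z_0z_1z_2+\alpha_3z_1^3)^2=D,$$ where $D=\alpha_3^2z_1^6+2\alpha_2\alpha_3z_0z_1^4z_2+(\alpha_2^2-4\alpha_1)z_0^2z_1^2z_2^2-4\alpha_3z_0^3z_2^3$. *)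

(* Defs.v *)
From HB Require Import structures.
From mathcomp Require Import all_boot all_order all_algebra.
From mathcomp Require Import complex Rstruct.
From Stdlib Require Import Reals.

Set Implicit Arguments.
Unset Strict Implicit.
Unset Printing Implicit Defensive.

Import Order.TTheory GRing.Theory Num.Theory.

Definition Cx : Type := complex R.

(* Main.v *)
Require Import Defs.
From HB Require Import structures.
From mathcomp Require Import all_boot all_order all_algebra.
From mathcomp Require Import complex Rstruct.
From mathcomp Require Import ring.
Import GRing.Theory Num.Theory.
Local Open Scope ring_scope.

Theorem proposition6p1 (a1 a2 a3 : complex Rdefinitions.R)
  (x : int -> complex Rdefinitions.R)
  (hx : forall v : int,
      let z i := x (v + i) in
      z 0 ^+ 2 * z 3 ^+ 2 + a1 * z 1 ^+ 2 * z 2 ^+ 2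
      + a2 * z 0 * z 1 * z 2 * z 3
      + a3 * (z 0 * z 2 ^+ 3 + z 1 ^+ 3 * z 3) = 0) :
  forall v : int,
    let z i := x (v + i) in
    let D := a3 ^+ 2 * z 1 ^+ 6 + 2 * a2 * a3 * z 0 * z 1 ^+ 4 * z 2
             + (a2 ^+ 2 - 4 * a1) * z 0 ^+ 2 * z 1 ^+ 2 * z 2 ^+ 2
             - 4 * a3 * z 0 ^+ 3 * z 2 ^+ 3 in
    (2 * z 0 ^+ 2 * z 3 + a2 * z 0 * z 1 * z 2 + a3 * z 1 ^+ 3) ^+ 2 = D /\
    (2 * z (-1) * z 2 ^+ 2 + a2 * z 0 * z 1 * z 2 + a3 * z 1 ^+ 3) ^+ 2 = D.
Proof.
move=> v z D.
have e0 := hx v.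
have e1 := hx (v - 1).
rewrite /= in e0 e1.
have i0 : v - 1 + 0 = v + (-1) by ring.
have i1 : v - 1 + 1 = v + 0 by ring.
have i2 : v - 1 + 2 = v + 1 by ring.
have i3 : v - 1 + 3 = v + 2 by ring.
rewrite i0 i1 i2 i3 in e1.
rewrite /D /z; split; apply/eqP; rewrite -subr_eq0; apply/eqP.
- transitivity (4 * x (v + 0) ^+ 2 *
   (x (v + 0) ^+ 2 * x (v + 3) ^+ 2 + a1 * x (v + 1) ^+ 2 * x (v + 2) ^+ 2 +
    a2 * x (v + 0) * x (v + 1) * x (v + 2) * x (v + 3) +
    a3 * (x (v + 0) * x (v + 2) ^+ 3 + x (v + 1) ^+ 3 * x (v + 3)))).
  + ring.
  + by rewrite e0 mulr0.
- transitivity (4 * x (v + 2) ^+ 2 *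
   (x (v + -1) ^+ 2 * x (v + 2) ^+ 2 + a1 * x (v + 0) ^+ 2 * x (v + 1) ^+ 2 +
    a2 * x (v + -1) * x (v + 0) * x (v + 1) * x (v + 2) +
    a3 * (x (v + -1) * x (v + 1) ^+ 3 + x (v + 0) ^+ 3 * x (v + 2)))).
  + ring.
  + by rewrite e1 mulr0.
Qed.
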